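(* For every strategy profile $s$ with $S_0(s)\vee S_1(s)$: if $\mathsf{SBcAes}(s)$ then $\mathsf{SPE}(s)$.
   Context: Let $P=\{A,B\}$ and $\mathrm{Choice}=\{d,r\}$; a payoff function is $f:P\to\mathbb{R}$. Strategy profiles are elements of the final coalgebra of $X\mapsto\mathbb{R}^P+P\times\mathrm{Choice}\times X\times X$ (finite or infinite trees $\langle f\rangle$ or $\langle p,c,s_d,s_r\rangle$, equality being bisimilarity). The payoff $\widehat{s}$ is the partial function given by $\widehat{\langle f\rangle}=f$, $\widehat{\langle p,d,s_d,s_r\rangle}=\widehat{s_d}$, $\widehat{\langle p,r,s_d,s_r\rangle}=\widehat{s_r}$. Convergence $\downarrow$: least predicate with $\downarrow(s)$ iff $s=\langle f\rangle$, or $s=\langle p,d,s_d,s_r\rangle\wedge\downarrow(s_d)$, or $s=\langle p,r,s_d,s_r\rangle\wedge\downarrow(s_r)$. Strong convergence $\Downarrow$: greatest predicate with $\Downarrow(s)$ iff $s=\langle f\rangle$, or $s=\langle p,c,s_d,s_r\rangle$ with $\downarrow(s),\Downarrow(s_d),\Downarrow(s_r)$. For a predicate $\Phi$, $\Box\Phi$ is the greatest predicate such that $\Box\Phi(s)$ iff $\Phi(s)$ and, whenever $s=\langle p,c,s_d,s_r\rangle$, $\Box\Phi(s_d)$ and $\Box\Phi(s_r)$. $\mathsf{PE}(s)$ holds iff $\Downarrow(s)$ and (if $s=\langle p,d,s_d,s_r\rangle$ then $\widehat{s_d}(p)\ge\widehat{s_r}(p)$) and (if $s=\langle p,r,s_d,s_r\rangle$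 then $\widehat{s_r}(p)\ge\widehat{s_d}(p)$); $\mathsf{SPE}=\Box\,\mathsf{PE}$. Let $f_{0,1}=(A\mapsto0,B\mapsto1)$, $f_{1,0}=(A\mapsto1,B\mapsto0)$. $S_0,S_1$ are the greatest predicates with $S_0(s)$ iff $s=\langle A,c,\langle f_{0,1}\rangle,s'\rangle$ with $S_1(s')$, and $S_1(s)$ iff $s=\langle B,c,\langle f_{1,0}\rangle,s'\rangle$ with $S_0(s')$. $\mathsf{BcAes}$ (''B continues and A eventually stops'') is the least predicate such that $\mathsf{BcAes}(s)$ holds iff: whenever $s=\langle p,c,\langle f\rangle,s'\rangle$, then ($p=B$, $f=f_{1,0}$, $c=r$, $\mathsf{BcAes}(s')$) or ($p=A$, $f=f_{0,1}$, and ($c=d$ or $\mathsf{BcAes}(s')$)). $\mathsf{SBcAes}=\Box\,\mathsf{BcAes}$. *)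

(* Defs.v *)
From Stdlib Require Import Reals.
Open Scope R_scope.

Inductive Agent : Type := A | B.
Inductive Choice : Type := d | r.

CoInductive Strat : Type :=
| Leaf : (Agent -> R) -> Strat
| Node : Agent -> Choice -> Strat -> Strat -> Strat.

(* Bisimilarity (the intended equality on strategy profiles) *)
CoInductive bisim : Strat -> Strat -> Prop :=
| bisim_leaf f g : (forall a, f a = g a) -> bisim (Leaf f) (Leaf g)
| bisim_node p c sd sr sd' sr' :
    bisim sd sd' -> bisim sr sr' -> bisim (Node p c sd sr) (Node p c sd' sr').

(* The partial payoff function s^ , given by its graph *)
Inductive payoff : Strat -> (Agent -> R) -> Prop :=
| payoff_leaf f : payoff (Leaf f) f
| payoff_d p sd sr f : payoff sd f -> payoff (Node p d sd sr) f
| payoff_r p sd sr f : payoff sr f -> payoff (Node p r sd sr) f.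

Inductive conv : Strat -> Prop :=
| conv_leaf f : conv (Leaf f)
| conv_d p sd sr : conv sd -> conv (Node p d sd sr)
| conv_r p sd sr : conv sr -> conv (Node p r sd sr).

CoInductive sconv : Strat -> Prop :=
| sconv_leaf f : sconv (Leaf f)
| sconv_node p c sd sr :
    conv (Node p c sd sr) -> sconv sd -> sconv sr -> sconv (Node p c sd sr).

CoInductive Always (Phi : Strat -> Prop) : Strat -> Prop :=
| always_leaf f : Phi (Leaf f) -> Always Phi (Leaf f)
| always_node p c sd sr :
    Phi (Node p c sd sr) -> Always Phi sd -> Always Phi sr ->
    Always Phi (Node p c sd sr).

(* Partial payoff comparison: s1^(p) >= s2^(p) (both payoffs are defined
   whenever the profile strongly converges). *)
Definition PE (s : Strat) : Prop :=
  sconv s /\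
  match s with
  | Leaf _ => True
  | Node p d sd sr =>
      forall fd fr, payoff sd fd -> payoff sr fr -> fd p >= fr p
  | Node p r sd sr =>
      forall fd fr, payoff sd fd -> payoff sr fr -> fr p >= fd p
  end.

Definition SPE : Strat -> Prop := Always PE.

Definition f01 : Agent -> R := fun a => match a with A => 0 | B => 1 end.
Definition f10 : Agent -> R := fun a => match a with A => 1 | B => 0 end.

CoInductive S0 : Strat -> Prop :=
| S0_intro c f s' : (forall a, f a = f01 a) -> S1 s' -> S0 (Node A c (Leaf f) s')
with S1 : Strat -> Prop :=
| S1_intro c f s' : (forall a, f a = f10 a) -> S0 s' -> S1 (Node B c (Leaf f) s').

(* "B continues and A eventually stops": least predicate *)
Inductive BcAes (s : Strat) : Prop :=
| BcAes_intro :
    (forall p c f s', s = Node p c (Leaf f) s' ->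
       (p = B /\ (forall a, f a = f10 a) /\ c = r /\ BcAes s')
       \/ (p = A /\ (forall a, f a = f01 a) /\ (c = d \/ BcAes s'))) ->
    BcAes s.

Definition SBcAes : Strat -> Prop := Always BcAes.

(* Main.v *)
Require Import Defs.
From Stdlib Require Import Reals Lra.
Open Scope R_scope.

Lemma spine t : S0 t \/ S1 t ->
  exists p c f t', t = Node p c (Leaf f) t' /\ (S0 t' \/ S1 t').
Proof.
  intros [H|H]; destruct H; do 4 eexists; split; eauto.
Qed.

Fixpoint conv_sp t (H : BcAes t) {struct H} : S0 t \/ S1 t -> conv t.
Proof.
  intros HS. destruct (spine t HS) as (p & c & f & t' & E & HS').
  destruct H as [h]. subst t.
  destruct (h p c f t' eq_refl) as [(Hp & Hf & Hc & Hb) | (Hp & Hf & [Hc|Hb])].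
  - subst c. apply conv_r. exact (conv_sp t' Hb HS').
  - subst c. apply conv_d. constructor.
  - destruct c. + apply conv_d; constructor.
    + apply conv_r. exact (conv_sp t' Hb HS').
Qed.

Lemma payoff_sp t g : payoff t g -> Always BcAes t -> (S0 t \/ S1 t) ->
  forall a, g a = f01 a.
Proof.
  induction 1; intros HA HS.
  - destruct HS as [HS|HS]; inversion HS.
  - destruct (spine _ HS) as (p' & c & f' & t' & E & HS'). injection E; intros; subst.
    inversion HA as [|? ? ? ? HB0 ? ?]; subst. destruct HB0 as [h].
    destruct (h p' d f' t' eq_refl) as [(Hp & Hf & Hc & Hb) | (Hp & Hf & _)].
    + discriminate.
    + inversion H; subst. apply Hf.
  - destruct (spine _ HS) as (p' & c & f' & t' & E & HS'). injection E; intros; subst.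
    inversion HA; subst. apply IHpayoff; auto.
Qed.

CoFixpoint sconv_sp t : Always BcAes t -> (S0 t \/ S1 t) -> sconv t.
Proof.
  intros HA HS. destruct (spine _ HS) as (p & c & f & t' & E & HS'). subst.
  inversion HA; subst. constructor.
  - apply conv_sp; auto.
  - constructor.
  - apply sconv_sp; auto.
Qed.

Theorem mainTheorem10 : forall s : Strat,
  (S0 s \/ S1 s) -> SBcAes s -> SPE s.
Proof.
  unfold SBcAes, SPE.
  cofix CH. intros s HS HA.
  destruct (spine _ HS) as (p & c & f & t' & E & HS'). subst.
  pose proof HA as HA0.
  inversion HA as [|? ? ? ? H1 ? ?]; subst. constructor.
  - split. { apply sconv_sp; auto. }
    destruct H1 as [h].
    assert (Hpr : forall fr, payoff t' fr -> forall a, fr a = f01 a)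
      by (intros; eapply payoff_sp; eauto).
    destruct (h p c f t' eq_refl) as [(Hp & Hf & Hc & Hb) | (Hp & Hf & _)]; subst.
    + intros fd fr Hd Hr. inversion Hd; subst. rewrite Hf, (Hpr fr Hr). simpl; lra.
    + destruct c; intros fd fr Hd Hr; inversion Hd; subst;
        rewrite Hf, (Hpr fr Hr); simpl; lra.
  - constructor. split. constructor. exact I.
  - apply CH; auto.
Qed.
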